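(* Let $\pi$ be a pyramid and $A$ a $\pi$-tableau with entries in an algebraically closed field $\Bbbk$ of characteristic zero. Then $\lambda_A-\tilde\rho$ is the weight of a one-dimensional $U(\mathfrak h)$-module (i.e. there is a one-dimensional $\mathfrak h$-module on which $\mathfrak t\subseteq\mathfrak h$ acts by $\lambda_A-\tilde\rho$) if and only if $A$ is column-connected.
   Context: Pyramid: integers $p_1\le\dots\le p_{m+n}$ with $\sum p_i=M+N$; rows $1,\dots,m+n$ top to bottom, row $i$ has $p_i$ consecutive boxes, each box not in the bottom row lies directly above a box of the row beneath; the bottom row has $\ell=p_{m+n}$ boxes; columns $1,\dots,\ell$. Rows are labelled ''$+$'' ($m$ rows, $M$ boxes in total) or ''$-$'' ($n$ rows, $N$ boxes); ''$+$'' boxes are numbered $1,\dots,M$ and ''$-$'' boxes $\bar1,\dots,\bar N$ down columns left to right; $I=\{1<\dots<M<\bar1<\dots<\bar N\}$; $\mathrm p(i)=0$ for $i\le M$, $1$ otherwise; $\mathrm{row}(i),\mathrm{col}(i)$ the row and column of box $i$. $\check q_c$ = number of ''$+$'' boxes minus number of ''$-$'' boxes in column $c$; $\check{\mathrm{row}}(i)$ = number of ''$+$''-rows minus number of ''$-$''-rows among rows $1,\dots,\mathrm{row}(i)$; $h=m-n$. $\mathfrak g=\mathfrak{gl}_{M|N}(\Bbbk)$ with elementary matrices $e_{i,j}$ of parity $\mathrm p(i)+\mathrm p(j)$, $\mathfrak t$ the diagonal matrices with dual basis $\varepsilon_i$, and $\mathfrak h=\mathrm{span}\{e_{i,j}:\mathrm{col}(i)=\mathrm{col}(j)\}$.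 $\tilde\rho=\sum_{i\in I}(-1)^{\mathrm p(i)}\big(h-\check{\mathrm{row}}(i)-(\check q_{\mathrm{col}(i)}+\dots+\check q_\ell)\big)\varepsilon_i$. A $\pi$-tableau $A$ fills the boxes with elements $a_i\in\Bbbk$ ($i\in I$), and $\lambda_A=\sum_{i\in I}a_i\varepsilon_i$. $A$ is column-connected if whenever box $j$ lies directly below box $i$: $a_i=a_j+1$ if $\mathrm p(i)=\mathrm p(j)$, and $a_i+a_j=-1$ if $\mathrm p(i)\ne\mathrm p(j)$. *)

(* Defs.v *)
From mathcomp Require Import all_boot all_order all_algebra.
Set Implicit Arguments. Unset Strict Implicit. Unset Printing Implicit Defensive.
Import Order.TTheory GRing.Theory Num.Theory.
Local Open Scope ring_scope.

(* A pyramid with [nrows] = m+n rows, rows indexed 0 (top) .. nrows-1 (bottom).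
   Row i consists of the boxes in columns start i, ..., start i + len i - 1
   (columns are numbered from 0, left to right); [plus i] says row i is a
   "+"-row (false = "-"-row). *)
Record pyramid := Pyramid {
  nrows : nat;
  start : nat -> nat;
  len   : nat -> nat;
  plus  : nat -> bool }.

Definition is_pyramid (P : pyramid) : Prop :=
  [/\ forall i, (i.+1 < nrows P)%N -> (len P i <= len P i.+1)%N,
      forall i, (i.+1 < nrows P)%N ->
        (start P i.+1 <= start P i)%N /\
        (start P i + len P i <= start P i.+1 + len P i.+1)%N
    & start P (nrows P).-1 = 0%N].

Definition ell (P : pyramid) : nat := len P (nrows P).-1.

Definition in_row (P : pyramid) (i c : nat) : bool :=
  (start P i <= c < start P i + len P i)%N.

(* The boxes of sign b, as (row, column) pairs, listed down columns from
   left to right: the k-th element (0-based) is the box numbered k+1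
   (resp. \bar{k+1}). *)
Definition boxes (P : pyramid) (b : bool) : seq (nat * nat) :=
  flatten [seq [seq (i, c) | i <- iota 0 (nrows P) & (plus P i == b) && in_row P i c]
          | c <- iota 0 (ell P)].

Definition Mp (P : pyramid) : nat := size (boxes P true).
Definition Np (P : pyramid) : nat := size (boxes P false).

(* The index set I = {1 < ... < M < \bar1 < ... < \barN} is encoded as
   'I_(M+N): index k < M is box k+1, index M+k is box \bar{k+1}. *)
Definition box (P : pyramid) (k : nat) : nat * nat :=
  if (k < Mp P)%N then nth (0%N, 0%N) (boxes P true) k
  else nth (0%N, 0%N) (boxes P false) (k - Mp P).

Definition rowI (P : pyramid) (k : nat) : nat := (box P k).1.
Definition colI (P : pyramid) (k : nat) : nat := (box P k).2.
(* parity p(k): false = 0 (index <= M), true = 1 *)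
Definition parI (P : pyramid) (k : nat) : bool := (Mp P <= k)%N.

Definition sgnrow (P : pyramid) (i : nat) : int := if plus P i then 1 else -1.

Definition mrows (P : pyramid) : nat := count (plus P) (iota 0 (nrows P)).
Definition nrows_minus (P : pyramid) : nat := count (fun i => ~~ plus P i) (iota 0 (nrows P)).
Definition hP (P : pyramid) : int := (mrows P)%:Z - (nrows_minus P)%:Z.

Definition crow (P : pyramid) (r : nat) : int := \sum_(0 <= i < r.+1) sgnrow P i.

Definition cq (P : pyramid) (c : nat) : int :=
  (count (fun bx => bx.2 == c) (boxes P true))%:Z -
  (count (fun bx => bx.2 == c) (boxes P false))%:Z.

(* coefficient of eps_k in rho-tilde *)
Definition rhot (P : pyramid) (k : nat) : int :=
  (-1) ^+ parI P k *
  (hP P - crow P (rowI P k) - \sum_(colI P k <= c < ell P) cq P c).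

Section Super.
Variables (K : fieldType) (P : pyramid).
Local Notation d := (Mp P + Np P)%N.

Definition in_h (X : 'M[K]_d) : Prop :=
  forall i j : 'I_d, colI P i != colI P j -> X i j = 0.

Definition homog (b : bool) (X : 'M[K]_d) : Prop :=
  forall i j : 'I_d, (parI P i (+) parI P j) != b -> X i j = 0.

Definition sbracket (bx bY : bool) (X Y : 'M[K]_d) : 'M[K]_d :=
  X *m Y - (-1) ^+ (bx && bY) *: (Y *m X).

(* A one-dimensional h-module V (a super vector space of total dimension 1,
   of either parity).  End(V) = K is purely even, so a representation of the
   Lie superalgebra h on V (an even linear map h -> gl(V) preserving the
   supercommutator) is a linear functional rho (extended arbitrarily to
   gl_{M|N}), zero on odd elements of h, with
   rho([X,Y]) = rho X rho Y - (-1)^{|X||Y|} rho Y rho X on homogeneous X, Y. *)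
Definition one_dim_hmodule (rho : 'M[K]_d -> K) : Prop :=
  [/\ forall (c : K) (X Y : 'M[K]_d), rho (c *: X + Y) = c * rho X + rho Y,
      forall X, in_h X -> homog true X -> rho X = 0
    & forall (bx bY : bool) (X Y : 'M[K]_d), in_h X -> in_h Y ->
        homog bx X -> homog bY Y ->
        rho (sbracket bx bY X Y) =
          rho X * rho Y - (-1) ^+ (bx && bY) * (rho Y * rho X)].

Definition has_weight (rho : 'M[K]_d -> K) (mu : 'I_d -> K) : Prop :=
  forall t : 'M[K]_d, (forall i j : 'I_d, i != j -> t i j = 0) ->
    rho t = \sum_(i < d) t i i * mu i.

Definition lambdaA_minus_rho (a : 'I_d -> K) : 'I_d -> K :=
  fun i => a i - (rhot P i)%:~R.

Definition column_connected (a : 'I_d -> K) : Prop :=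
  forall i j : 'I_d, rowI P j = (rowI P i).+1 -> colI P j = colI P i ->
    if parI P i == parI P j then a i = a j + 1 else a i + a j = -1.

End Super.

Arguments in_h {K} P X.
Arguments homog {K} P b X.
Arguments sbracket {K} P bx bY X Y.
Arguments one_dim_hmodule {K} P rho.
Arguments has_weight {K} P rho mu.
Arguments lambdaA_minus_rho {K} P a i.
Arguments column_connected {K} P a.

(* Main.v *)
Require Import Defs.
From mathcomp Require Import all_boot all_order all_algebra zify ring.
Set Implicit Arguments. Unset Strict Implicit. Unset Printing Implicit Defensive.
Import Order.TTheory GRing.Theory Num.Theory.
Local Open Scope ring_scope.


Lemma mem_boxes P b r c :
  ((r, c) \in boxes P b) = [&& (c < ell P)%N, (r < nrows P)%N, plus P r == b & in_row P r c].
Proof.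
apply/idP/idP.
  by move=> /allpairsPdep[c' [r' [Hc Hr [-> ->]]]]; move: Hc Hr;
   rewrite mem_iota mem_filter mem_iota /= !add0n => -> /andP[/andP[-> ->] ->].
move=> /and4P[Hc Hr Hp Hi]; apply/allpairsPdep; exists c, r.
by rewrite mem_iota mem_filter mem_iota /= !add0n Hc Hr Hp Hi.
Qed.

Lemma uniq_boxes P b : uniq (boxes P b).
Proof.
apply: allpairs_uniq_dep; first exact: iota_uniq.
  by move=> c _; apply: filter_uniq; apply: iota_uniq.
by move=> [c1 i1] [c2 i2] _ _ /= [-> ->].
Qed.



Lemma box_mem P k : (k < Mp P + Np P)%N -> box P k \in boxes P (~~ parI P k).
Proof.
move=> Hd; rewrite /box /parI; case: (ltnP k (Mp P)) => Hk /=.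
  by apply: mem_nth; exact: Hk.
by apply: mem_nth; rewrite ltn_subLR.
Qed.

Lemma box_props P k : (k < Mp P + Np P)%N ->
  [/\ (colI P k < ell P)%N, (rowI P k < nrows P)%N,
      plus P (rowI P k) = ~~ parI P k & in_row P (rowI P k) (colI P k)].
Proof.
move=> /box_mem; rewrite /rowI /colI; case: (box P k) => r c.
by rewrite mem_boxes => /and4P[-> -> /eqP -> ->].
Qed.

Lemma box_inj P i k : (i < Mp P + Np P)%N -> (k < Mp P + Np P)%N ->
  box P i = box P k -> i = k.
Proof.
move=> Hi Hk E.
have [_ _ pi _] := box_props Hi; have [_ _ pk _] := box_props Hk.
have Ep : parI P i = parI P k.
  by apply: negb_inj; rewrite -pi -pk /rowI E.
move: E Ep; rewrite /box /parI; case: (ltnP i (Mp P)) => Hi'; case: (ltnP k (Mp P)) => Hk' //= E _.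
  by apply/eqP; rewrite -(nth_uniq (0%N,0%N) Hi' Hk' (uniq_boxes P true)) E.
have: (i - Mp P = k - Mp P)%N.
  apply/eqP; rewrite -(nth_uniq (0%N,0%N) _ _ (uniq_boxes P false)) ?E //;
  by rewrite ltn_subLR.
lia.
Qed.

Lemma box_exists P r c : (c < ell P)%N -> (r < nrows P)%N -> in_row P r c ->
  exists k : 'I_(Mp P + Np P), box P k = (r, c).
Proof.
move=> Hc Hr Hi.
have Hm : (r, c) \in boxes P (plus P r) by rewrite mem_boxes Hc Hr eqxx Hi.
case Hp: (plus P r) Hm => Hm.
  have Hlt : (index (r, c) (boxes P true) < Mp P + Np P)%N.
    by apply: ltn_addr; rewrite /Mp index_mem.
  exists (Ordinal Hlt); rewrite /box /= /Mp index_mem Hm; exact: nth_index.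
have Hlt : (Mp P + index (r, c) (boxes P false) < Mp P + Np P)%N.
  by rewrite ltn_add2l /Np index_mem.
exists (Ordinal Hlt); rewrite /box /= ifF; last by apply/negbTE; rewrite -leqNgt leq_addr.
by rewrite addKn nth_index.
Qed.

Lemma col_up P r c : is_pyramid P -> in_row P r c -> (r.+1 < nrows P)%N -> in_row P r.+1 c.
Proof.
case=> _ H2 _ Hi Hr; have [h1 h2] := H2 r Hr; move: Hi; rewrite /in_row; lia.
Qed.



Section A.
Variables (K : fieldType) (P : pyramid).
Local Notation d := (Mp P + Np P)%N.

Definition condA (mu : 'I_d -> K) := forall i k : 'I_d, colI P i = colI P k ->
  (-1) ^+ (parI P i) * mu i = (-1) ^+ (parI P k) * mu k.

Lemma rho_delta (rho : 'M[K]_d -> K) mu j : has_weight P rho mu ->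
  rho (delta_mx j j) = mu j.
Proof.
move=> hw; rewrite hw.
  rewrite (bigD1 j) //= mxE !eqxx mul1r big1 ?addr0 // => l /negbTE nl.
  by rewrite mxE nl mul0r.
move=> i' j' ne; rewrite mxE; case: eqP => [Ei|] //=; case: eqP => [Ej|] //=.
by rewrite Ei Ej eqxx in ne.
Qed.

Lemma thmA_fwd mu : (exists rho, one_dim_hmodule P rho /\ has_weight P rho mu) -> condA mu.
Proof.
move=> [rho [[lin odd0 brk] hw]] i k Hc.
case: (eqVneq i k) => [-> //| nik].
set b := parI P i (+) parI P k.
have hX : in_h P (delta_mx i k : 'M[K]_d).
  move=> i' j' ne; rewrite mxE; case: (i' =P _) ne => [-> | _] //=;
  case: (j' =P _) => [-> | _] //=; by rewrite Hc eqxx.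
have hY : in_h P (delta_mx k i : 'M[K]_d).
  move=> i' j' ne; rewrite mxE; case: (i' =P _) ne => [-> | _] //=;
  case: (j' =P _) => [-> | _] //=; by rewrite Hc eqxx.
have hbX : homog P b (delta_mx i k : 'M[K]_d).
  move=> i' j' ne; rewrite mxE; case: (i' =P _) ne => [-> | _] //=;
  case: (j' =P _) => [-> | _] //=; by rewrite eqxx.
have hbY : homog P b (delta_mx k i : 'M[K]_d).
  move=> i' j' ne; rewrite mxE; case: (i' =P _) ne => [-> | _] //=;
  case: (j' =P _) => [-> | _] //=; by rewrite /b addbC eqxx.
have := brk b b _ _ hX hY hbX hbY.
have -> : rho (delta_mx i k) * rho (delta_mx k i) -
   (-1) ^+ (b && b) * (rho (delta_mx k i) * rho (delta_mx i k)) = 0.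
  rewrite andbb; case Eb: b in hbX *.
    rewrite (odd0 _ hX hbX) !mul0r mulr0. by rewrite mulr0 subrr.
  by rewrite expr0 mul1r mulrC subrr.
rewrite /sbracket !mul_delta_mx andbb.
have -> : delta_mx i i - (-1) ^+ b *: delta_mx k k =
  (- (-1) ^+ b) *: delta_mx k k + delta_mx i i :> 'M[K]_d.
  by rewrite addrC scaleNr.
rewrite lin !(rho_delta _ hw) => E.
have Ei : mu i = (-1) ^+ b * mu k.
  by apply/eqP; rewrite -subr_eq0 -E; apply/eqP; ring.
by rewrite Ei /b signr_addb -mulrA signrMK.
Qed.


Lemma thmA_bwd mu : condA mu -> exists rho, one_dim_hmodule P rho /\ has_weight P rho mu.
Proof.
move=> cond.
pose rho (X : 'M[K]_d) := \sum_(l < d) X l l * mu l.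
have odd0 : forall X, in_h P X -> homog P true X -> rho X = 0.
  by move=> X _ hX; apply: big1 => l _; rewrite hX ?mul0r // addbb.
exists rho; split=> //; split=> //.
  move=> c X Y; rewrite /rho mulr_sumr -big_split; apply: eq_bigr => l _.
  by rewrite !mxE mulrDl mulrA.
move=> bx bY X Y inX inY hbX hbY.
have -> : rho X * rho Y - (-1) ^+ (bx && bY) * (rho Y * rho X) = 0.
  case Eb: (bx && bY).
    move/andP: Eb => [Ex _]; rewrite Ex in hbX.
    by rewrite (odd0 _ inX hbX) !mul0r !mulr0 subrr.
  by rewrite expr0 mul1r mulrC subrr.
set s : K := (-1) ^+ (bx && bY).
have term : forall j l : 'I_d, X j l * Y l j * mu j = s * (Y l j * X j l * mu l).
  move=> j l.
  case: (eqVneq (X j l) 0) => [->|nx]; first by ring.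
  case: (eqVneq (Y l j) 0) => [->|ny]; first by ring.
  case: (eqVneq (colI P j) (colI P l)) => [Hc | /inX xj]; last by rewrite xj eqxx in nx.
  case: (eqVneq (parI P j (+) parI P l) bx) => [ex | /hbX xj]; last by rewrite xj eqxx in nx.
  case: (eqVneq (parI P l (+) parI P j) bY) => [ey | /hbY yj]; last by rewrite yj eqxx in ny.
  have Hm : mu j = (-1) ^+ (parI P j) * ((-1) ^+ (parI P l) * mu l).
    by rewrite -(cond _ _ Hc) signrMK.
  rewrite /s -ex -ey addbC andbb signr_addb Hm; ring.
rewrite /rho /sbracket.
have -> : \sum_(j < d) (X *m Y - (-1) ^+ (bx && bY) *: (Y *m X)) j j * mu j =
  \sum_(j < d) \sum_(l < d) X j l * Y l j * mu j -
  s * \sum_(j < d) \sum_(l < d) Y j l * X l j * mu j.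
  rewrite mulr_sumr -sumrB; apply: eq_bigr => j _.
  rewrite !mxE mulrBl !mulr_suml; congr (_ - _).
  by rewrite -mulrA mulr_suml.
rewrite exchange_big /=.
under eq_bigr => j _ do under eq_bigr => l _ do rewrite term.
under eq_bigr => j _ do rewrite -mulr_sumr.
by rewrite -mulr_sumr subrr.
Qed.

End A.



Lemma iff_lin (K : fieldType) (x1 y1 x2 y2 c : K) : c != 0 ->
  x1 - y1 = c * (x2 - y2) -> (x1 = y1 <-> x2 = y2).
Proof.
move=> c0 E; split=> H.
  apply/eqP; rewrite -subr_eq0; move/eqP: H; rewrite -subr_eq0 E mulf_eq0.
  by rewrite (negbTE c0).
by rewrite -[x1](subrK y1) E H subrr mulr0 add0r.
Qed.

Section B.
Variables (K : fieldType) (P : pyramid).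
Local Notation d := (Mp P + Np P)%N.
Variable a : 'I_d -> K.

Definition ff (i : 'I_d) : K := (-1) ^+ (parI P i) * a i + (crow P (rowI P i))%:~R.

Lemma sg_mu (i : 'I_d) : (-1) ^+ (parI P i) * lambdaA_minus_rho P a i =
  ff i - (hP P - \sum_(colI P i <= c < ell P) cq P c)%:~R.
Proof.
rewrite /lambdaA_minus_rho /rhot /ff intrM intr_sign.
rewrite mulrBr signrMK; ring.
Qed.

Lemma sgnrow_sign r : (sgnrow P r)%:~R = (-1) ^+ (~~ plus P r) :> K.
Proof. by rewrite /sgnrow; case: (plus P r) => /=; rewrite ?rmorph1 ?rmorphN1 ?expr0 ?expr1. Qed.

Lemma adj (i j : 'I_d) : rowI P j = (rowI P i).+1 ->
  (ff i = ff j <-> (if parI P i == parI P j then a i = a j + 1 else a i + a j = -1)).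
Proof.
move=> Hr.
have [_ _ pj _] := box_props (ltn_ord j).
have Ec : (crow P (rowI P j))%:~R = (crow P (rowI P i))%:~R + (-1) ^+ (parI P j) :> K.
  by rewrite Hr /crow big_nat_recr //= intrD sgnrow_sign -Hr pj negbK.
rewrite /ff Ec.
case: (parI P i); case: (parI P j) => /=.
- by apply: (@iff_lin _ _ _ _ _ (-1)); [rewrite oppr_eq0 oner_eq0 | ring].
- by apply: (@iff_lin _ _ _ _ _ (-1)); [rewrite oppr_eq0 oner_eq0 | ring].
- by apply: (@iff_lin _ _ _ _ _ 1); [rewrite oner_eq0 | ring].
- by apply: (@iff_lin _ _ _ _ _ 1); [rewrite oner_eq0 | ring].
Qed.

Lemma chain : is_pyramid P -> column_connected P a ->
  forall n (i k : 'I_d), colI P i = colI P k -> rowI P k = (rowI P i + n)%N -> ff i = ff k.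
Proof.
move=> HP cc; elim=> [|n IH] i k Hc Hr.
  suff -> : i = k by [].
  apply: val_inj; apply: box_inj; [exact: ltn_ord | exact: ltn_ord |].
  rewrite [box P i]surjective_pairing [box P k]surjective_pairing.
  by congr pair; [rewrite -/(rowI P i) -/(rowI P k) Hr addn0 | exact: Hc].
have [ci ri _ ini] := box_props (ltn_ord i).
have [_ rk _ _] := box_props (ltn_ord k).
have Hn : ((rowI P i).+1 < nrows P)%N by move: rk; rewrite Hr; lia.
have [j Ej] := box_exists ci Hn (col_up HP ini Hn).
have rj : rowI P j = (rowI P i).+1 by rewrite /rowI Ej.
have cj : colI P j = colI P i by rewrite /colI Ej.
rewrite ((adj rj).2 (cc i j rj cj)).
apply: IH; first by rewrite cj.
by rewrite rj Hr; lia.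
Qed.

End B.

Lemma thmB (K : fieldType) P (HP : is_pyramid P) (a : 'I_(Mp P + Np P) -> K) :
  (forall i k : 'I_(Mp P + Np P), colI P i = colI P k -> ff a i = ff a k) <->
  column_connected P a.
Proof.
split.
  move=> H i j Hr Hc; apply/(adj a Hr).1; apply: H; by rewrite Hc.
move=> cc i k Hc.
case: (leqP (rowI P i) (rowI P k)) => Hle.
  by apply: (chain HP cc (n := (rowI P k - rowI P i)%N)) => //; lia.
symmetry; apply: (chain HP cc (n := (rowI P i - rowI P k)%N)) => //; lia.
Qed.

Theorem main6 (K : fieldType) (P : pyramid) (HP : is_pyramid P) (a : 'I_(Mp P + Np P) -> K) :
  (exists rho : 'M[K]_(Mp P + Np P) -> K,
      one_dim_hmodule P rho /\ has_weight P rho (lambdaA_minus_rho P a))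
  <-> column_connected P a.
Proof.
rewrite -(thmB HP); split.
  move=> /thmA_fwd cA i k Hc; have := cA i k Hc; rewrite !sg_mu Hc.
  by move/addIr.
move=> H; apply: thmA_bwd => i k Hc; by rewrite !sg_mu Hc (H i k Hc).
Qed.



Theorem mainTheorem6 (K : closedFieldType) (char0 : [pchar K] =i pred0)
  (P : pyramid) (HP : is_pyramid P) (a : 'I_(Mp P + Np P) -> K) :
  (exists rho : 'M[K]_(Mp P + Np P) -> K,
      one_dim_hmodule P rho /\ has_weight P rho (lambdaA_minus_rho P a))
  <-> column_connected P a.
Proof. exact: main6. Qed.
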